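(* Let $(C,T,k)$ be a $(\rho,\alpha,n)$-coding gadget over $\mathbb{R}$ with $C\subseteq\mathbb{R}^N$, and let $Q_1,\dots,Q_m\in\mathbb{R}^{n\times n}$, $b_1,\dots,b_m\in\mathbb{R}$. Let $V\subseteq \mathbb{R}^{N\times N}\times\mathbb{R}$ be the set of pairs $(Y,z)$ satisfying $$Y\in C\otimes C,\quad Y=Y^T,\quad z=\tfrac1k\sum_{i\in[N]}Y[i,i],\quad Q_\ell(TYT^T)=z\,b_\ell\ \ \forall \ell\in[m].$$ Then: (i) if there exists $x\in\{0,1\}^n$ with $Q_\ell(xx^T)=b_\ell$ for all $\ell$, then $V$ contains a nonzero $(Y,z)$ with all entries in $\{0,1\}$ and $\|(Y,z)\|_0 = k^2+1\le \rho^2 d(C)^2+1$; (ii) if there is no $x\in\mathbb{R}^n$ with $Q_\ell(xx^T)=b_\ell$ for all $\ell$, then every nonzero $(Y,z)\in V$ satisfies $\|(Y,z)\|_0\ge \alpha\, d(C)^2$.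
   Context: For $Q,X$ square matrices of equal size, $Q(X):=\sum_{i,j}Q[i,j]X[i,j]$. $\|(Y,z)\|_0$ is the number of nonzero entries of $Y$ plus $1$ if $z\ne0$. For subspaces $U,W$, $U\otimes W$ is the space of matrices whose columns lie in $U$ and rows in $W$. $H^N_k := \{x\in\{0,1\}^N : \|x\|_0 = k\}$; $d(C):=\min_{u\in C\setminus\{0\}}\|u\|_0$; $C$ is $\alpha$-non-overlapping if for all linearly independent $u,v\in C$, $|\mathrm{supp}(u)\cup\mathrm{supp}(v)|\ge\alpha\, d(C)$. A triple $(C,T,k)$ is a $(\rho,\alpha,n)$-coding gadget over $\mathbb{R}$ if $C\subseteq\mathbb{R}^N$ is a subspace, $T\in\mathbb{R}^{n\times N}$, $k\le\rho\, d(C)$, $T(C\cap H^N_k)\supseteq\{0,1\}^n$, and $C$ is $\alpha$-non-overlapping. *)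

(* Defs.v *)
From HB Require Import structures.
From mathcomp Require Import all_boot all_order all_algebra.
From mathcomp Require Import boolp reals.
Set Implicit Arguments. Unset Strict Implicit. Unset Printing Implicit Defensive.
Import Order.TTheory GRing.Theory Num.Theory.
Local Open Scope ring_scope.

Section Defs.
Variable R : realType.

Definition qapp n (Q X : 'M[R]_n) : R := \sum_(i < n) \sum_(j < n) Q i j * X i j.

Definition nnz m n (A : 'M[R]_(m, n)) : nat := #|[set ij : 'I_m * 'I_n | A ij.1 ij.2 != 0]|.

Definition supp N (u : 'rV[R]_N) : {set 'I_N} := [set i | u 0 i != 0].

Definition nnz0 N (Y : 'M[R]_N) (z : R) : nat := (nnz Y + (z != 0%R))%N.

Definition is01 m n (A : 'M[R]_(m, n)) : Prop := forall i j, A i j = 0 \/ A i j = 1.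

(* A subspace C of R^N is represented by a matrix whose row space is C;
   u \in C  is  (u <= C)%MS. *)
Definition inC N (C : 'M[R]_N) (u : 'rV[R]_N) : Prop := (u <= C)%MS.

(* d(C) = min nonzero weight of C (0 by convention if C = 0, where it is undefined) *)
Definition wt_pred N (C : 'M[R]_N) : pred nat :=
  fun w => `[< exists u : 'rV[R]_N, inC C u /\ u != 0 /\ #|supp u| = w >].

Definition mindist N (C : 'M[R]_N) : nat :=
  match pselect (exists w, wt_pred C w) with
  | left ex => ex_minn ex
  | right _ => 0%N
  end.

Definition inH N (k : nat) (u : 'rV[R]_N) : Prop := is01 u /\ #|supp u| = k.

Definition non_overlapping N (C : 'M[R]_N) (alpha : R) : Prop :=
  forall u v : 'rV[R]_N, inC C u -> inC C v -> row_free (col_mx u v) ->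
    alpha * (mindist C)%:R <= #|supp u :|: supp v|%:R.

(* (C,T,k) is a (rho,alpha,n)-coding gadget over R; T : R^{n x N} acts on
   column vectors, so T(u) = T *m u^T for u : 'rV_N. *)
Definition coding_gadget (rho alpha : R) (n N : nat)
    (C : 'M[R]_N) (T : 'M[R]_(n, N)) (k : nat) : Prop :=
  [/\ k%:R <= rho * (mindist C)%:R,
      (forall x : 'cV[R]_n, is01 x ->
         exists2 u : 'rV[R]_N, inC C u /\ inH k u & T *m u^T = x)
    & non_overlapping C alpha].

(* Y in C (x) C : rows and columns of Y lie in C *)
Definition in_tensor N (C : 'M[R]_N) (Y : 'M[R]_N) : Prop :=
  (Y <= C)%MS /\ (Y^T <= C)%MS.

Definition inV (n N m k : nat) (C : 'M[R]_N) (T : 'M[R]_(n, N))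
    (Q : 'I_m -> 'M[R]_n) (b : 'I_m -> R) (Y : 'M[R]_N) (z : R) : Prop :=
  [/\ in_tensor C Y, Y = Y^T, z = k%:R^-1 * \tr Y
    & forall l, qapp (Q l) (T *m Y *m T^T) = z * b l].

End Defs.

(* Main.v *)
Require Import Defs.
From HB Require Import structures.
From mathcomp Require Import all_boot all_order all_algebra.
From mathcomp Require Import boolp reals.
From mathcomp Require Import ring lra.
Import Order.TTheory GRing.Theory Num.Theory.
Local Open Scope ring_scope.

Lemma not_free_mult (F : fieldType) (N : nat) (r s : 'rV[F]_N) :
  r != 0 -> ~~ row_free (col_mx r s) -> exists c, s = c *: r.
Proof.
move=> r0 nf.
case: (boolP (s <= r)%MS) => [/submxP [D ->]|nsr].
  by exists (D 0 0); rewrite {1}(mx11_scalar D) mul_scalar_mx.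
exfalso; move: nf; rewrite /row_free.
have -> : \rank (col_mx r s) = \rank (r + s)%MS by rewrite -addsmxE.
have lt : (r < r + s)%MS by rewrite ltmxE addsmxSl addsmx_sub submx_refl nsr.
have := rank_ltmx lt; rewrite rank_rV r0 => h.
have := rank_leq_row (col_mx r s).
have -> : \rank (col_mx r s) = \rank (r + s)%MS by rewrite -addsmxE.
move=> h2; rewrite eqn_leq h2 /= => /negP; apply.
exact: h.
Qed.

Lemma mindist_le (R : realType) N (C : 'M[R]_N) (u : 'rV[R]_N) :
  inC C u -> u != 0 -> (mindist C <= #|supp u|)%N.
Proof.
move=> Cu u0; rewrite /mindist; case: pselect => [ex|//].
case: ex_minnP => w _ Hmin; apply: Hmin; apply/asboolP; exists u; split=> //.
Qed.

Lemma qappZ (R : realType) n (Q X : 'M[R]_n) (a : R) :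
  qapp Q (a *: X) = a * qapp Q X.
Proof.
rewrite /qapp mulr_sumr; apply: eq_bigr => i _; rewrite mulr_sumr.
by apply: eq_bigr => j _; rewrite mxE mulrCA.
Qed.

Lemma part1 (R : realType) (rho : R) (n N m k : nat)
    (C : 'M[R]_N) (T : 'M[R]_(n, N)) (Q : 'I_m -> 'M[R]_n) (b : 'I_m -> R) :
  (0 < k)%N -> k%:R <= rho * (mindist C)%:R ->
  (forall x : 'cV[R]_n, is01 x ->
         exists2 u : 'rV[R]_N, inC C u /\ inH k u & T *m u^T = x) ->
  ((exists x : 'cV[R]_n, is01 x /\ forall l, qapp (Q l) (x *m x^T) = b l) ->
     exists Y : 'M[R]_N, exists z : R,
       [/\ inV k C T Q b Y z, (Y != 0) || (z != 0), is01 Y & z = 0 \/ z = 1] /\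
       nnz0 Y z = (k ^ 2 + 1)%N /\
       (k ^ 2 + 1)%:R <= rho ^+ 2 * (mindist C)%:R ^+ 2 + 1).
Proof.
move=> k0 hk hT [x [x01 hx]].
have [u [Cu [u01 uk]] Tu] := hT x x01.
have Yij a c : (u^T *m u) a c = u 0 a * u 0 c by rewrite mxE big_ord1 !mxE.
exists (u^T *m u), 1; split; [split; [split| | |] | split].
- split.
  + exact: submx_trans (submxMl _ _) Cu.
  + rewrite trmx_mul trmxK; exact: submx_trans (submxMl _ _) Cu.
- by rewrite trmx_mul trmxK.
- have -> : \tr (u^T *m u) = k%:R.
    rewrite /mxtrace -uk -sum1_card natr_sum [RHS]big_mkcond /=.
    apply: eq_bigr => i _; rewrite Yij inE.
    by case: (u01 0 i) => ->; rewrite ?mulr0 ?mulr1 ?eqxx ?oner_neq0.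
  by rewrite mulVf // pnatr_eq0 -lt0n.
- move=> l; rewrite mul1r -hx -Tu trmx_mul trmxK !mulmxA.
  done.
- by rewrite oner_neq0 orbT.
- move=> a c; rewrite Yij.
  by case: (u01 0 a) => ->; case: (u01 0 c) => ->; rewrite ?mulr0 ?mul0r ?mulr1; auto.
- by right.
- rewrite /nnz0 oner_neq0 /nnz.
  have -> : [set ij : 'I_N * 'I_N | (u^T *m u) ij.1 ij.2 != 0] = setX (supp u) (supp u).
    by apply/setP => -[a c]; rewrite !inE Yij mulf_eq0 negb_or.
  by rewrite cardsX uk mulnn.
- rewrite natrD natrX lerD2r -exprMn.
  have k0' : (0 : R) <= k%:R by [].
  nra.
Qed.

Lemma part2 (R : realType) (alpha : R) (n N m k : nat)
    (C : 'M[R]_N) (T : 'M[R]_(n, N)) (Q : 'I_m -> 'M[R]_n) (b : 'I_m -> R) :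
  (0 < k)%N -> non_overlapping C alpha ->
  (~ (exists x : 'cV[R]_n, forall l, qapp (Q l) (x *m x^T) = b l) ->
     forall (Y : 'M[R]_N) (z : R), inV k C T Q b Y z -> (Y != 0) || (z != 0) ->
       alpha * (mindist C)%:R ^+ 2 <= (nnz0 Y z)%:R).
Proof.
move=> k0 hno nox Y z [[CY CYt] HY Hz HQ] nz.
have sym a c : Y a c = Y c a.
  by have := congr1 (fun M : 'M[R]_N => M a c) HY; rewrite mxE.
have CR l : inC C (row l Y) by exact: submx_trans (row_sub _ _) CY.
have Y0 : Y != 0.
  apply/negP => /eqP Y0; move: nz; rewrite Y0 eqxx /= Hz Y0 /mxtrace.
  by rewrite big1 ?mulr0 ?eqxx // => i _; rewrite mxE.
have [i ri0] : exists i, row i Y != 0.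
  case: (boolP [exists i, row i Y != 0]) => [/existsP//|/existsPn H].
  move: Y0; have -> : Y = 0; last by rewrite eqxx.
  apply/matrixP => a c; have := H a; rewrite negbK => /eqP/rowP/(_ c).
  by rewrite !mxE.
set r := row i Y.
case: (boolP [exists l, row_free (col_mx r (row l Y))]) => [/existsP [l fl]|/existsPn HA].
- have hU := hno _ _ (CR i) (CR l) fl.
  set U := supp r :|: supp (row l Y) in hU.
  have step1 : (\sum_(a in U) #|supp (row a Y)| <= nnz Y)%N.
    have -> : (\sum_(a in U) #|supp (row a Y)| =
               \sum_(a in U) \sum_(c | Y a c != 0%R) 1)%N.
      apply: eq_bigr => a _; rewrite -sum1_card; apply: eq_bigl => c.
      by rewrite inE mxE.
    rewrite pair_big_dep /nnz.
    rewrite (eq_bigl (fun p => p \in [set p : 'I_N * 'I_N | (p.1 \in U) && (Y p.1 p.2 != 0%R)]));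
      last by move=> p; rewrite inE.
    rewrite sum1_card; apply: subset_leq_card.
    apply/subsetP => -[a c]; rewrite !inE /= => /andP[_ ->].
    by [].
  have step2 : (#|U| * mindist C <= \sum_(a in U) #|supp (row a Y)|)%N.
    rewrite -sum_nat_const; apply: leq_sum => a aU; apply: mindist_le (CR a) _.
    apply/eqP => H; move: aU; rewrite !inE !mxE.
    case/orP; rewrite sym => /eqP; apply.
      by have := congr1 (fun M : 'rV[R]_N => M 0 i) H; rewrite !mxE.
    by have := congr1 (fun M : 'rV[R]_N => M 0 l) H; rewrite !mxE.
  have h2 : ((#|U| * mindist C)%N%:R : R) <= (nnz0 Y z)%:R.
    by rewrite ler_nat (leq_trans step2) // (leq_trans step1) // leq_addr.
  rewrite natrM in h2.
  have d0 : (0 : R) <= (mindist C)%:R by [].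
  nra.
- have HC l0 : exists c, forall j, Y l0 j = c * Y i j.
    have [c Hc] := @not_free_mult _ _ _ _ ri0 (HA l0); exists c => j.
    by have := congr1 (fun M : 'rV[R]_N => M 0 j) Hc; rewrite !mxE.
  have Yii : Y i i != 0.
    apply/negP => /eqP Y0'; move/eqP: ri0; apply; apply/rowP => j.
    by rewrite !mxE sym; have [c ->] := HC j; rewrite Y0' mulr0.
  have Yf a c : Y a c = (Y i i)^-1 * (Y i a * Y i c).
    have [c' Hc] := HC a; rewrite (sym i a) !Hc; field; exact: Yii.
  set s := \sum_j Y i j ^+ 2.
  have s0 : 0 < s.
    rewrite /s (bigD1 i) //=.
    have h1 : 0 < Y i i ^+ 2 by rewrite exprn_even_gt0 // Yii orbT.
    have h2 : 0 <= \sum_(j | j != i) Y i j ^+ 2.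
      by apply: sumr_ge0 => j _; apply: sqr_ge0.
    lra.
  have trY : \tr Y = (Y i i)^-1 * s.
    rewrite /mxtrace /s mulr_sumr; apply: eq_bigr => j _; by rewrite [Y j j]Yf expr2.
  have RR : r^T *m r = Y i i *: Y.
    apply/matrixP => a c; rewrite !mxE big_ord1 !mxE [Y a c]Yf; field; exact: Yii.
  have kR : (k%:R : R) != 0 by rewrite pnatr_eq0 -lt0n.
  have ks : 0 <= (k%:R : R) / s by apply: divr_ge0 => //; apply: ltW.
  exfalso; apply: nox.
  exists (Num.sqrt (k%:R / s) *: (T *m r^T)) => l0.
  have E : (Num.sqrt (k%:R / s) *: (T *m r^T)) *m (Num.sqrt (k%:R / s) *: (T *m r^T))^T
      = (k%:R / s * Y i i) *: (T *m Y *m T^T).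
    rewrite linearZ /= -scalemxAl -scalemxAr scalerA -expr2 sqr_sqrtr //.
    rewrite trmx_mul trmxK mulmxA -(mulmxA T (r^T) r) RR -scalemxAr -scalemxAl scalerA.
    by [].
  rewrite E qappZ HQ Hz trY; field.
  by rewrite kR Yii (gt_eqF s0).
Qed.


Theorem mainTheorem10 (R : realType) (rho alpha : R) (n N m k : nat)
    (C : 'M[R]_N) (T : 'M[R]_(n, N)) (Q : 'I_m -> 'M[R]_n) (b : 'I_m -> R) :
  (0 < k)%N ->
  coding_gadget rho alpha C T k ->
  ((exists x : 'cV[R]_n, is01 x /\ forall l, qapp (Q l) (x *m x^T) = b l) ->
     exists Y : 'M[R]_N, exists z : R,
       [/\ inV k C T Q b Y z, (Y != 0) || (z != 0), is01 Y & z = 0 \/ z = 1] /\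
       nnz0 Y z = (k ^ 2 + 1)%N /\
       (k ^ 2 + 1)%:R <= rho ^+ 2 * (mindist C)%:R ^+ 2 + 1) /\
  (~ (exists x : 'cV[R]_n, forall l, qapp (Q l) (x *m x^T) = b l) ->
     forall (Y : 'M[R]_N) (z : R), inV k C T Q b Y z -> (Y != 0) || (z != 0) ->
       alpha * (mindist C)%:R ^+ 2 <= (nnz0 Y z)%:R).
Proof.
move=> k0 [hk hT hno]; split.
- exact: part1.
- exact: part2.
Qed.
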